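(* Let $A$ be a nonempty finite set of $n$ alternatives. If a choice rule $C$ on $A$ satisfies capacity-filling, monotonicity, and the capacity-wise weak axiom of revealed preference (CWARP), then it also satisfies the irrelevance of accepted alternatives.
   Context: Let $\mathcal{A}$ be the set of all nonempty subsets of $A$. A choice rule is a map $C$ assigning to each $(S,q)\in\mathcal{A}\times\{1,\dots,n\}$ a nonempty set $C(S,q)\subseteq S$ with $|C(S,q)|\le q$; write $R(S,q)=S\setminus C(S,q)$. Capacity-filling: for each $(S,q)$, $|C(S,q)|=\min\{|S|,q\}$. Monotonicity: for each $S\in\mathcal{A}$ and $q\in\{1,\dots,n-1\}$, $C(S,q)\subseteq C(S,q+1)$. For $q\in\{2,\dots,n\}$ and $a,b\in A$, $a$ is revealed to be preferred to $b$ at $q$ if there exists $S\in\mathcal{A}$ with $a,b\notin C(S,q-1)$, $a\in C(S,q)$ and $b\in R(S,q)$. CWARP: for each $q\in\{2,\dots,n\}$ and each $a,b\in A$, if $a$ is revealed to be preferred to $b$ at $q$, then $b$ is not revealed to be preferred to $a$ at $q$. Irrelevance of accepted alternatives: for each $S,S'\in\mathcal{A}$ and $q\in\{1,\dots,n-1\}$, if $R(S,q)=R(S',q)$ then $C(S,q+1)\cap R(S,q)=C(S',q+1)\cap R(S',q)$. *)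

(* Defs.v *)
From mathcomp Require Import all_boot.
Set Implicit Arguments. Unset Strict Implicit. Unset Printing Implicit Defensive.

(* A choice rule is modelled as a
   total function C : {set A} -> nat -> {set A}; only its values on the
   domain (S nonempty, 1 <= q <= n) matter, and all axioms are restricted to
   this domain. *)

Definition rej (A : finType) (C : {set A} -> nat -> {set A}) (S : {set A}) (q : nat)
  : {set A} := S :\: C S q.

Definition is_choice_rule (A : finType) (C : {set A} -> nat -> {set A}) : Prop :=
  forall (S : {set A}) (q : nat), S != set0 -> 1 <= q <= #|A| ->
    [/\ C S q != set0, C S q \subset S & #|C S q| <= q].

Definition capacity_filling (A : finType) (C : {set A} -> nat -> {set A}) : Prop :=
  forall (S : {set A}) (q : nat), S != set0 -> 1 <= q <= #|A| ->
    #|C S q| = minn #|S| q.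

Definition monotonicity (A : finType) (C : {set A} -> nat -> {set A}) : Prop :=
  forall (S : {set A}) (q : nat), S != set0 -> 1 <= q <= #|A| - 1 ->
    C S q \subset C S q.+1.

Definition revealed_pref (A : finType) (C : {set A} -> nat -> {set A})
  (q : nat) (a b : A) : Prop :=
  exists S : {set A}, [/\ S != set0, a \notin C S q.-1, b \notin C S q.-1,
                          a \in C S q & b \in rej C S q].

Definition CWARP (A : finType) (C : {set A} -> nat -> {set A}) : Prop :=
  forall (q : nat) (a b : A), 2 <= q <= #|A| ->
    revealed_pref C q a b -> ~ revealed_pref C q b a.

Definition irrelevance_accepted (A : finType) (C : {set A} -> nat -> {set A}) : Prop :=
  forall (S S' : {set A}) (q : nat), S != set0 -> S' != set0 ->
    1 <= q <= #|A| - 1 ->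
    rej C S q = rej C S' q ->
    C S q.+1 :&: rej C S q = C S' q.+1 :&: rej C S' q.

(* Main.v *)
Require Import Defs.
From mathcomp Require Import all_boot.
From mathcomp Require Import zify.

Lemma key (A : finType) (C : {set A} -> nat -> {set A}) (S : {set A}) q z :
  is_choice_rule C -> capacity_filling C -> monotonicity C ->
  S != set0 -> 1 <= q <= #|A| - 1 -> z \in rej C S q ->
  exists x, C S q.+1 :&: rej C S q = [set x].
Proof.
move=> hch hcf hmo hS hq hz.
have hq1 : 1 <= q <= #|A| by apply/andP; split; lia.
have hq2 : 1 <= q.+1 <= #|A| by apply/andP; split; lia.
have [_ sub1 _] := hch S q hS hq1.
have [_ sub2 _] := hch S q.+1 hS hq2.
have c1 := hcf S q hS hq1.
have c2 := hcf S q.+1 hS hq2.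
have m := hmo S q hS hq.
have pr : C S q \proper S.
  apply/properP; split => //; exists z; move: hz; rewrite /rej inE => /andP[] //.
have lt := proper_card pr.
have E : C S q.+1 :&: rej C S q = C S q.+1 :\: C S q.
  apply/setP => y; rewrite /rej !inE.
  case hy: (y \in C S q.+1); rewrite ?andbF ?andbT //=.
  by rewrite (subsetP sub2 _ hy) andbT.
have : #|C S q.+1 :\: C S q| = 1.
  rewrite cardsD (setIidPr m). lia.
by move=> h1; have [x hx] := cards1P (introT eqP h1); exists x; rewrite E.
Qed.

Theorem lemma1 (A : finType) (C : {set A} -> nat -> {set A}) :
  0 < #|A| ->
  is_choice_rule C ->
  capacity_filling C ->
  monotonicity C ->
  CWARP C ->
  irrelevance_accepted C.
Proof.
move=> hA hch hcf hmo hcw S S' q hS hS' hq hR.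
case: (set_0Vmem (rej C S q)) => [R0|[z hz]].
  have R0' := R0; rewrite hR in R0'.
  by rewrite R0 R0' !setI0.
have hz' : z \in rej C S' q by rewrite -hR.
have [x hx] := @key _ C S q z hch hcf hmo hS hq hz.
have [y hy] := @key _ C S' q z hch hcf hmo hS' hq hz'.
rewrite hx hy; case: (eqVneq x y) => [->//|nxy].
exfalso.
have hq2 : 2 <= q.+1 <= #|A| by apply/andP; split; lia.
have xin : x \in C S q.+1 :&: rej C S q by rewrite hx set11.
have yin : y \in C S' q.+1 :&: rej C S' q by rewrite hy set11.
move: xin yin; rewrite !in_setI => /andP[xC xR] /andP[yC yR].
have xR' : x \in rej C S' q by rewrite -hR.
have yR' : y \in rej C S q by rewrite hR.
have yrej : y \in rej C S q.+1.
  move: (yR'); rewrite /rej !inE => /andP[_ ->]; rewrite andbT.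
  apply/negP => yC'.
  have : y \in C S q.+1 :&: rej C S q by rewrite in_setI yC' yR'.
  by rewrite hx inE eq_sym (negbTE nxy).
have xrej : x \in rej C S' q.+1.
  move: (xR'); rewrite /rej !inE => /andP[_ ->]; rewrite andbT.
  apply/negP => xC'.
  have : x \in C S' q.+1 :&: rej C S' q by rewrite in_setI xC' xR'.
  by rewrite hy inE (negbTE nxy).
apply: (hcw q.+1 x y hq2).
  exists S; split => //=.
  - by move: xR; rewrite /rej inE => /andP[].
  - by move: (yR'); rewrite /rej inE => /andP[].
exists S'; split => //=.
- by move: yR; rewrite /rej inE => /andP[].
- by move: xR'; rewrite /rej inE => /andP[].
Qed.
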